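(* Let $G$ be a weighted graph as in the context. For every integer $m\geq 1$, \[q_{2m}^G(\rho)\leq\frac{3h_G^{-1}(m)}{m},\] where $\rho=\rho(G)$.
   Context: $G$ is a locally finite connected graph with at least two vertices, vertex set $V(G)$ and distinguished vertex $\rho=\rho(G)$; $\mu^G$ is a symmetric weight with $\mu^G_{xy}>0$ iff $\{x,y\}$ is an edge, $\mu^G_x:=\sum_y\mu^G_{xy}$, $\nu^G(A):=\sum_{x\in A}\mu^G_x$. The discrete time simple random walk $X^G$ has transition probabilities $P_G(x,y)=\mu^G_{xy}/\mu^G_x$ and law $\mathbf{P}^G_x$; $p^G_m(x,y):=\mathbf{P}^G_x(X^G_m=y)/\nu^G(\{y\})$, $q^G_m(x,y):=\frac12(p^G_m(x,y)+p^G_{m+1}(x,y))$, $q^G_m(x):=q^G_m(\rho,x)$. The generator is $\mathcal{L}_Gf(x)=\sum_yP_G(x,y)(f(y)-f(x))$, $(f,g)_G:=\sum_xf(x)g(x)\nu^G(\{x\})$, $\mathcal{E}_G(f,g):=-(\mathcal{L}_Gf,g)_G$, $\mathcal{F}_G:=\{f:\mathcal{E}_G(f,f)<\infty\}$. The resistance metric is \[R_G(x,y):=\sup\left\{\frac{|f(x)-f(y)|^2}{\mathcal{E}_G(f,f)}:f\in\mathcal{F}_G,\ \mathcal{E}_G(f,f)>0\right\}.\] Set $V_G(r):=\nu^G(\{x:R_G(\rho,x)\le r\})$, $h_G(r):=rV_G(r)$, and $h_G^{-1}(m):=\sup\{r:h_G(r)\le m\}$. *)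

(* Defs.v *)
From HB Require Import structures.
From mathcomp Require Import all_boot all_order all_algebra.
From mathcomp Require Import all_classical all_reals all_analysis.
Set Implicit Arguments. Unset Strict Implicit. Unset Printing Implicit Defensive.
Import Order.TTheory GRing.Theory Num.Theory.
Local Open Scope classical_set_scope.
Local Open Scope ring_scope.

Section WeightedGraph.
Variables (R : realType) (V : choiceType) (mu : V -> V -> R).

Definition adj (x y : V) : bool := 0 < mu x y.

Definition weighted_graph : Prop :=
  [/\ (forall x y, mu x y = mu y x),
      (forall x y, 0 <= mu x y),
      (forall x, mu x x = 0),
      (forall x, finite_set [set y | adj x y])
    & (forall x y, exists s : seq V, path adj x s /\ last x s = y)].

(* mu_x = sum_y mu_xy (a finite sum by local finiteness) *)
Definition muv (x : V) : R := fine (\esum_(y in setT) (mu x y)%:E).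

Definition nu (A : set V) : \bar R := \esum_(x in A) (muv x)%:E.

Definition Ptrans (x y : V) : R := mu x y / muv x.

Fixpoint Pstep (m : nat) (x y : V) : R :=
  match m with
  | 0%N => if x == y then 1 else 0
  | m'.+1 => fine (\esum_(z in setT) (Ptrans x z * Pstep m' z y)%:E)
  end.

Definition pker (m : nat) (x y : V) : R := Pstep m x y / fine (nu [set y]).

Definition qker (m : nat) (x y : V) : R := 2^-1 * (pker m x y + pker m.+1 x y).

Definition energy (f : V -> R) : \bar R :=
  (2^-1)%:E * \esum_(p in setT) (mu p.1 p.2 * (f p.1 - f p.2) ^+ 2)%:E.

Definition resist (x y : V) : \bar R :=
  ereal_sup [set (`|f x - f y| ^+ 2 / fine (energy f))%:E | f in
              [set f : V -> R | (energy f < +oo)%E /\ (0 < energy f)%E]].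

Definition Vball (rho : V) (r : R) : \bar R :=
  nu [set x | (resist rho x <= r%:E)%E].

Definition hfun (rho : V) (r : R) : \bar R := (r%:E * Vball rho r)%E.

Definition hinv (rho : V) (m : R) : \bar R :=
  ereal_sup [set r%:E | r in [set r : R | (hfun rho r <= m%:E)%E]].

End WeightedGraph.

(* Main.v *)
Require Import Defs.
From HB Require Import structures.
From mathcomp Require Import all_boot all_order all_algebra.
From mathcomp Require Import finmap.
From mathcomp Require Import all_classical all_reals all_analysis.
From mathcomp.algebra_tactics Require Import ring lra.
From mathcomp Require Import zify.
Import Order.TTheory GRing.Theory Num.Theory.
Local Open Scope classical_set_scope.
Local Open Scope ring_scope.

Lemma esumT_fin (R : realType) (X : choiceType) (a : X -> R) (T : set X) :
  finite_set T -> (forall x, 0 <= a x) -> (forall x, ~ T x -> a x = 0) ->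
  \esum_(x in [set: X]) (a x)%:E = (\sum_(x <- fset_set T) a x)%:E.
Proof.
move=> fT a0 Ta0.
rewrite (_ : \esum_(x in setT) _ = \esum_(x in setT `&` T) (a x)%:E); last first.
  rewrite esum_mkcondr; apply: eq_esum => x _; case: ifPn => // /negP.
  by rewrite inE => /Ta0 ->.
rewrite setTI esum_fset //; last by move=> x _; rewrite lee_fin.
by rewrite fsbig_finite // sumEFin.
Qed.

Section Abs.
Variable R : realType.

Lemma sum_pairs (F : nat -> R) K :
  \sum_(i < 2 * K) F i = \sum_(j < K) (F (2 * j)%N + F (2 * j).+1).
Proof.
elim: K => [|K IH]; first by rewrite !big_ord0.
have -> : (2 * K.+1 = (2 * K).+2)%N by lia.
by rewrite !big_ord_recr /= IH addrA.
Qed.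

Lemma tele (w : nat -> R) a L :
  \sum_(j < L) (w (a + j)%N - w (a + j)%N.+1) = w a - w (a + L)%N.
Proof.
elim: L => [|L IH]; first by rewrite big_ord0 addn0 subrr.
by rewrite big_ord_recr /= IH addnS; ring.
Qed.

Lemma dmono (w : nat -> R) m :
  (forall j, (j < 2 * m)%N -> w (2 * j.+1)%N + w (2 * j.+1)%N.+1 <= w (2 * j)%N + w (2 * j)%N.+1) ->
  forall a b, (a <= b)%N -> (b <= 2 * m)%N ->
  w (2 * b)%N + w (2 * b)%N.+1 <= w (2 * a)%N + w (2 * a)%N.+1.
Proof.
move=> hd a b ab; rewrite -(subnK ab); elim: (b - a)%N => [|k IH] h //.
rewrite addSn; apply: le_trans (hd _ _) (IH _); lia.
Qed.

Lemma abstract_bound (w : nat -> R) (m : nat) : (1 <= m)%N -> (forall n, 0 <= w n) ->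
  (forall j, (j < 2 * m)%N -> w (2 * j.+1)%N + w (2 * j.+1)%N.+1 <= w (2 * j)%N + w (2 * j)%N.+1) ->
  (w (2 * m)%N + w (2 * m)%N.+1) / 2 <= ((2 * (m./2).+1)%N)%:R^-1 * \sum_(i < (2 * (m./2).+1)%N) w ((2 * (m - m./2))%N + i)%N
  /\ ((2 * (m./2).+1)%N)%:R^-2 * \sum_(i < (2 * (m./2).+1)%N) \sum_(j < (2 * (m./2).+1)%N) (w ((2 * (m - m./2))%N + i + ((2 * (m - m./2))%N + j))%N - w ((2 * (m - m./2))%N + i + ((2 * (m - m./2))%N + j))%N.+1)
     <= (w (2 * m)%N + w (2 * m)%N.+1) / 2 / m%:R.
Proof.
move=> m1 w0 hd.
set K := (m./2).+1. set N0 := (2 * (m - m./2))%N. set L := (2 * K)%N.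
have dm := @dmono w m hd.
have [hm1 hm2] : (2 * m./2 <= m /\ m <= 2 * m./2 + 1)%N.
  have := odd_double_half m; rewrite -muln2.
  by case: (odd m) => /= <-; lia.
move: hm1 hm2 @K @N0 @L; set h := m./2 => hm1 hm2 K N0 L.
set dM := w (2 * m)%N + w (2 * m)%N.+1.
have dM0 : 0 <= dM by rewrite addr_ge0.
set k : R := K%:R.
set mm : R := m%:R.
have KR : 0 < k by rewrite ltr0n.
have LR : L%:R = 2 * k :> R by rewrite /L natrM.
have mR : 0 < mm by rewrite ltr0n.
have mK : mm <= 2 * k.
  have : (m <= 2 * K)%N by rewrite /K; lia.
  by rewrite -(ler_nat R) natrM.
split.
  have S1 : k * dM <= \sum_(i < L) w (N0 + i)%N.
    rewrite /L (sum_pairs (fun i => w (N0 + i)%N)).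
    have -> : k * dM = \sum_(j < K) dM by rewrite sumr_const card_ord mulr_natl.
    apply: ler_sum => j _.
    have hj := ltn_ord j.
    have -> : (N0 + 2 * j = 2 * (m - h + j))%N by rewrite /N0; lia.
    have -> : (N0 + (2 * j).+1 = (2 * (m - h + j)).+1)%N by rewrite /N0; lia.
    have eK : K = h.+1 by [].
    apply: dm; last lia. move: hm1 hm2 hj eK; clear; lia.
  rewrite LR; set S := \sum_(i < L) _ in S1 *.
  apply: le_trans (_ : (2 * k)^-1 * (k * dM) <= _); last first.
    by rewrite ler_wpM2l // invr_ge0 mulr_ge0 // ltW.
  by rewrite le_eqVlt; apply/orP; left; apply/eqP; field; rewrite gt_eqF.
have S2 : \sum_(i < L) \sum_(j < L) (w (N0 + i + (N0 + j))%N - w (N0 + i + (N0 + j))%N.+1)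
   <= k * dM.
  apply: (@le_trans _ _ (\sum_(i < L) w (N0 + N0 + i)%N)).
    apply: ler_sum => i _.
    have -> : \sum_(j < L) (w (N0 + i + (N0 + j))%N - w (N0 + i + (N0 + j))%N.+1)
      = \sum_(j < L) (w (N0 + N0 + i + j)%N - w (N0 + N0 + i + j)%N.+1).
      by apply: eq_bigr => j _; have -> : (N0 + i + (N0 + j) = N0 + N0 + i + j)%N by lia.
    rewrite tele; have := w0 (N0 + N0 + i + L)%N; lra.
  rewrite /L (sum_pairs (fun i => w (N0 + N0 + i)%N)).
  have -> : k * dM = \sum_(j < K) dM by rewrite sumr_const card_ord mulr_natl.
  apply: ler_sum => j _.
  have hj := ltn_ord j.
  have -> : (N0 + N0 + 2 * j = 2 * (N0 + j))%N by lia.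
  have -> : (N0 + N0 + (2 * j).+1 = (2 * (N0 + j)).+1)%N by lia.
  have eK : K = h.+1 by []. have eN : N0 = (2 * (m - h))%N by [].
  apply: dm; rewrite eN; move: hm1 hm2 hj eK; clear; lia.
set S := \sum_(i < L) _ in S2 *.
rewrite LR.
apply: le_trans (_ : (2 * k) ^-2 * (k * dM) <= _).
  by rewrite ler_wpM2l // invr_ge0 exprn_ge0 // mulr_ge0 // ltW.
have -> : (2 * k) ^-2 * (k * dM) = dM / 2 / mm * (mm / (2 * k)).
  by field; rewrite !gt_eqF.
apply: ler_piMr; first by rewrite divr_ge0 // ?divr_ge0 // ltW.
by rewrite ler_pdivrMr ?mul1r // mulr_gt0.
Qed.
End Abs.

Lemma sum_sub_le (R : realType) (T : choiceType) (F : T -> R) (A S : seq T) :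
  uniq A -> uniq S -> (forall x, 0 <= F x) -> (forall x, x \notin S -> F x = 0) ->
  \sum_(x <- A) F x <= \sum_(x <- S) F x.
Proof.
move=> uA uS F0 FS.
rewrite (bigID (fun x => x \in S)) /= [X in _ + X]big1 ?addr0; last first.
  by move=> x /FS.
rewrite [X in _ <= X](bigID (fun x => x \in A)) /=.
apply: ler_wpDr; first by apply: sumr_ge0.
have -> : \sum_(x <- A | x \in S) F x = \sum_(x <- [seq x <- A | x \in S]) F x.
  by rewrite big_filter.
have -> : \sum_(x <- S | x \in A) F x = \sum_(x <- [seq x <- S | x \in A]) F x.
  by rewrite big_filter.
rewrite le_eqVlt; apply/orP; left; apply/eqP; apply: perm_big.
apply: uniq_perm; rewrite ?filter_uniq // => x.
by rewrite !mem_filter andbC.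
Qed.

Section G.
Variables (R : realType) (V : choiceType) (mu : V -> V -> R) (rho : V).
Hypothesis Hg : weighted_graph mu.
Hypothesis H2 : exists x y : V, x <> y.

Let mu_sym x y : mu x y = mu y x. Proof. by case: Hg. Qed.
Let mu_ge0 x y : 0 <= mu x y. Proof. by case: Hg. Qed.
Let mu_lf x : finite_set [set y | adj mu x y]. Proof. by case: Hg. Qed.
Let mu_conn x y : exists s : seq V, path (adj mu) x s /\ last x s = y.
Proof. by case: Hg. Qed.

Lemma adj_sym x y : adj mu x y = adj mu y x.
Proof. by rewrite /adj mu_sym. Qed.

Lemma mu_eq0 x y : ~~ adj mu x y -> mu x y = 0.
Proof. by rewrite /adj -leNgt => h; apply/eqP; rewrite eq_le h mu_ge0. Qed.

Lemma muvE x (T : set V) : finite_set T -> [set y | adj mu x y] `<=` T ->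
  muv mu x = \sum_(y <- fset_set T) mu x y.
Proof.
move=> fT NT; rewrite /muv (@esumT_fin _ _ _ T) //= => y Ty.
by apply: mu_eq0; apply/negP => /NT.
Qed.

Lemma exists_nb x : exists z, adj mu x z.
Proof.
case: H2 => a [b ab].
have [y xy] : exists y, x <> y.
  case: (eqVneq a x) => [ax|ax]; first by exists b => xb; apply: ab; rewrite ax.
  by exists a => xa; move: ax; rewrite xa eqxx.
case: (mu_conn x y) => [[|z s]] [/=]; first by move=> _ /xy.
by move=> /andP[h _] _; exists z.
Qed.

Lemma muv_gt0 x : 0 < muv mu x.
Proof.
case: (exists_nb x) => z xz.
rewrite (@muvE x [set y | adj mu x y]) //.
rewrite (bigD1_seq z) //=; last by rewrite in_fset_set // inE.
by rewrite ltr_wpDr // sumr_ge0.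
Qed.

Lemma muv_neq0 x : muv mu x != 0. Proof. by rewrite gt_eqF // muv_gt0. Qed.

Lemma Ptrans_ge0 x y : 0 <= Ptrans mu x y.
Proof. by rewrite /Ptrans divr_ge0 // ltW // muv_gt0. Qed.

Lemma PtransE x y : Ptrans mu x y * muv mu x = mu x y.
Proof. by rewrite /Ptrans divfK // muv_neq0. Qed.

Fixpoint Ball n : set V := match n with
  | 0%N => [set rho]
  | n'.+1 => Ball n' `|` \bigcup_(y in Ball n') [set x | adj mu y x] end.

Lemma Ball_fin n : finite_set (Ball n).
Proof.
elim: n => [|n IH] /=; first exact: finite_set1.
by rewrite finite_setU; split => //; apply: bigcup_finite.
Qed.

Lemma Ball_S n : Ball n `<=` Ball n.+1.
Proof. by move=> x Bx; left. Qed.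

Lemma Ball_mono n k : (n <= k)%N -> Ball n `<=` Ball k.
Proof.
move=> /subnK <-; elim: (k - n)%N => [|j IH] //.
by apply: subset_trans IH _; rewrite addSn; apply: Ball_S.
Qed.

Lemma Ball_nb n x y : Ball n x -> adj mu x y -> Ball n.+1 y.
Proof. by move=> Bx xy; right; exists x. Qed.

Lemma Ball0 n : Ball n rho.
Proof. by apply: (@Ball_mono 0 n (leq0n n)). Qed.


Lemma Pstep_ge0 n x y : 0 <= Pstep mu n x y.
Proof.
elim: n x => [|n IH] x /=; first by case: ifP.
by apply: fine_ge0; apply: esum_ge0 => z _; rewrite lee_fin mulr_ge0 // Ptrans_ge0.
Qed.

Lemma adj_of_Ptrans x z : Ptrans mu x z != 0 -> adj mu x z.
Proof.
move=> h; rewrite /adj lt_neqAle mu_ge0 andbT eq_sym.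
by apply: contraNN h => /eqP; rewrite /Ptrans => ->; rewrite mul0r.
Qed.

Lemma Pstep_supp n x : Pstep mu n x rho != 0 -> Ball n x.
Proof.
elim: n x => [|n IH] x /=; first by case: (eqVneq x rho) => [-> //|_]; rewrite eqxx.
move=> h.
case: (pselect (exists z, Ptrans mu x z * Pstep mu n z rho != 0)) => [[z hz]|nz].
  move: hz; rewrite mulf_eq0 negb_or => /andP[h1 h2].
  by apply: (@Ball_nb _ z) => //; [apply: IH | rewrite adj_sym; apply: adj_of_Ptrans].
have t0 z : Ptrans mu x z * Pstep mu n z rho = 0.
  by apply/eqP/negPn/negP => hz; apply: nz; exists z.
by move: h; rewrite esum1 ?eqxx // => z _; rewrite t0.
Qed.

Lemma Pstep_S n x (T : set V) : finite_set T -> Ball n `<=` T ->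
  Pstep mu n.+1 x rho = \sum_(z <- fset_set T) Ptrans mu x z * Pstep mu n z rho.
Proof.
move=> fT BT; rewrite /= (@esumT_fin _ _ _ T) //.
  by move=> z; rewrite mulr_ge0 // ?Ptrans_ge0 ?Pstep_ge0.
move=> z Tz; have -> : Pstep mu n z rho = 0; last by rewrite mulr0.
by apply/eqP/negPn/negP => /Pstep_supp /BT.
Qed.


Section Fin.
Variable M : nat.

Definition SS : seq V := fset_set (Ball M).

Lemma memS x : Ball M x -> x \in SS.
Proof. by move=> h; rewrite in_fset_set ?inE //; apply: Ball_fin. Qed.

Definition uu n x := Pstep mu n x rho / muv mu rho.
Definition ww n := uu n rho.
Definition ip (g h : V -> R) := \sum_(x <- SS) g x * h x * muv mu x.
Definition PT (g : V -> R) x := \sum_(y <- SS) Ptrans mu x y * g y.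
Definition QQ g h := ip g h - ip (PT g) h.

Lemma uu_ge0 n x : 0 <= uu n x.
Proof. by rewrite /uu divr_ge0 ?Pstep_ge0 // ltW // muv_gt0. Qed.

Lemma uu_supp n x : uu n x != 0 -> Ball n x.
Proof.
move=> h; apply: Pstep_supp; apply: contraNN h => /eqP; rewrite /uu => ->; by rewrite mul0r.
Qed.

Lemma uuS n : (n <= M)%N -> PT (uu n) = uu n.+1.
Proof.
move=> nM; apply/funext => x; rewrite /uu (@Pstep_S n x (Ball M)) //.
- by rewrite mulr_suml /PT; apply: eq_bigr => y _; rewrite mulrA.
- exact: Ball_fin.
- exact: Ball_mono.
Qed.

Lemma ip_PT g h : ip (PT g) h = \sum_(x <- SS) \sum_(y <- SS) mu x y * g y * h x.
Proof.
rewrite /ip /PT; apply: eq_bigr => x _; rewrite !mulr_suml.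
by apply: eq_bigr => y _; rewrite -(PtransE x y); ring.
Qed.

Lemma ip_PTsym g h : ip (PT g) h = ip g (PT h).
Proof.
rewrite ip_PT /ip /PT.
transitivity (\sum_(x <- SS) \sum_(y <- SS) mu y x * h y * g x).
  rewrite exchange_big; apply: eq_bigr => x _; apply: eq_bigr => y _.
  by rewrite mu_sym; ring.
apply: eq_bigr => x _; rewrite mulr_sumr mulr_suml.
by apply: eq_bigr => y _; rewrite mu_sym -(PtransE x y); ring.
Qed.

Lemma ip_u0 h : ip (uu 0) h = h rho.
Proof.
rewrite /ip (bigD1_seq rho) /=; [|exact: memS (Ball0 M)|exact: fset_uniq].
rewrite big1_seq ?addr0.
  by rewrite /uu /= eqxx mul1r; field; apply: muv_neq0.
move=> x /andP[xr _]; by rewrite /uu /= (negPf xr) mul0r !mul0r.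
Qed.

Lemma ip_uu a b : (a + b <= M)%N -> ip (uu a) (uu b) = ww (a + b).
Proof.
elim: a b => [|a IH] b hab; first by rewrite ip_u0.
rewrite -uuS; last by lia.
rewrite ip_PTsym uuS; last by lia.
by rewrite IH ?addnS //; lia.
Qed.

Lemma QQ_uu a b : (a + b < M)%N -> QQ (uu a) (uu b) = ww (a + b) - ww (a + b).+1.
Proof.
move=> h; rewrite /QQ uuS; last by lia.
by rewrite !ip_uu ?addSn //; lia.
Qed.


Lemma ip_linl (k : R) L (g : nat -> V -> R) h :
  ip (fun x => k * \sum_(i < L) g i x) h = k * \sum_(i < L) ip (g i) h.
Proof.
rewrite /ip mulr_sumr.
transitivity (\sum_(x <- SS) \sum_(i < L) k * (g i x * h x * muv mu x)).
  apply: eq_bigr => x _; rewrite mulr_sumr !mulr_suml.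
  by apply: eq_bigr => i _; ring.
by rewrite exchange_big; apply: eq_bigr => i _; rewrite mulr_sumr.
Qed.

Lemma ip_comm g h : ip g h = ip h g.
Proof. by apply: eq_bigr => x _; rewrite (mulrC (g x)). Qed.

Lemma ip_linr (k : R) L (g : nat -> V -> R) h :
  ip h (fun x => k * \sum_(i < L) g i x) = k * \sum_(i < L) ip h (g i).
Proof.
by rewrite ip_comm ip_linl; congr (_ * _); apply: eq_bigr => i _; rewrite ip_comm.
Qed.

Lemma PT_lin (k : R) L (g : nat -> V -> R) :
  PT (fun x => k * \sum_(i < L) g i x) = fun x => k * \sum_(i < L) PT (g i) x.
Proof.
apply/funext => x; rewrite /PT mulr_sumr.
transitivity (\sum_(y <- SS) \sum_(i < L) k * (Ptrans mu x y * g i y)).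
  apply: eq_bigr => y _; rewrite mulr_sumr mulr_sumr.
  by apply: eq_bigr => i _; ring.
by rewrite exchange_big; apply: eq_bigr => i _; rewrite mulr_sumr.
Qed.

Definition comb (k : R) (L N0 : nat) x := k * \sum_(i < L) uu (N0 + i) x.

Lemma QQ_comb k L N0 : (N0 + L + (N0 + L) <= M)%N ->
  QQ (comb k L N0) (comb k L N0) =
  k ^+ 2 * \sum_(i < L) \sum_(j < L) (ww (N0 + i + (N0 + j)) - ww (N0 + i + (N0 + j)).+1).
Proof.
move=> hM; rewrite /QQ /comb (PT_lin k L (fun i => uu (N0 + i))).
have -> : (fun x => k * \sum_(i < L) PT (uu (N0 + i)) x) =
          (fun x => k * \sum_(i < L) uu (N0 + i).+1 x).
  apply/funext => x; congr (_ * _); apply: eq_bigr => i _.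
  by rewrite uuS //; have := ltn_ord i; lia.
rewrite (ip_linl k L (fun i => uu (N0 + i))) (ip_linl k L (fun i => uu (N0 + i).+1)).
rewrite -mulrBr -sumrB expr2 -mulrA; congr (_ * _).
rewrite mulr_sumr; apply: eq_bigr => i _.
rewrite !(ip_linr k L (fun i => uu (N0 + i))) -mulrBr -sumrB; congr (_ * _); apply: eq_bigr => j _.
have hi := ltn_ord i; have hj := ltn_ord j.
rewrite !ip_uu ?addSn //; lia.
Qed.

Lemma sum_nb x n : Ball n x -> (n < M)%N ->
  \sum_(y <- SS) mu x y = muv mu x.
Proof.
move=> Bx nM; rewrite (@muvE x (Ball M)) //; first exact: Ball_fin.
by move=> y xy; apply: (@Ball_mono n.+1) => //; apply: Ball_nb Bx xy.
Qed.

Lemma QQ_sq g n : (forall x, g x != 0 -> Ball n x) -> (n < M)%N ->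
  2 * QQ g g = \sum_(x <- SS) \sum_(y <- SS) mu x y * (g x - g y) ^+ 2.
Proof.
move=> gB nM.
have E1 : \sum_(x <- SS) \sum_(y <- SS) mu x y * g x ^+ 2 = ip g g.
  apply: eq_bigr => x _; rewrite -mulr_suml.
  have [gx0|gxn] := eqVneq (g x) 0; first by rewrite gx0 expr0n /= !mulr0 mul0r.
  by rewrite (@sum_nb x n) //; [ring | apply: gB].
have E2 : \sum_(x <- SS) \sum_(y <- SS) mu x y * g y ^+ 2 = ip g g.
  rewrite exchange_big; apply: eq_bigr => y _.
  under eq_bigr do rewrite mu_sym.
  rewrite -mulr_suml.
  have [gx0|gxn] := eqVneq (g y) 0; first by rewrite gx0 expr0n /= !mulr0 mul0r.
  by rewrite (@sum_nb y n) //; [ring | apply: gB].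
have E3 := ip_PT g g.
transitivity (\sum_(x <- SS) \sum_(y <- SS)
   (mu x y * g x ^+ 2 + mu x y * g y ^+ 2 - 2 * (mu x y * g y * g x))); last first.
  by apply: eq_bigr => x _; apply: eq_bigr => y _; ring.
under eq_bigr do rewrite sumrB big_split /= -mulr_sumr.
rewrite sumrB big_split /= -mulr_sumr E1 E2 -E3 /QQ; ring.
Qed.

Lemma QQ_ge0 g n : (forall x, g x != 0 -> Ball n x) -> (n < M)%N -> 0 <= QQ g g.
Proof.
move=> gB nM; have := @QQ_sq g n gB nM.
have : 0 <= \sum_(x <- SS) \sum_(y <- SS) mu x y * (g x - g y) ^+ 2.
  by apply: sumr_ge0 => x _; apply: sumr_ge0 => y _; rewrite mulr_ge0 // sqr_ge0.
move=> h1 h2; rewrite -h2 in h1; lra.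
Qed.

Lemma sum_one_PT g n : (forall x, g x != 0 -> Ball n x) -> (n < M)%N ->
  ip (PT g) (fun=> 1) = ip g (fun=> 1).
Proof.
move=> gB nM; rewrite ip_PT /ip exchange_big /=; apply: eq_bigr => y _.
under eq_bigr do rewrite mu_sym mulr1.
rewrite -mulr_suml.
have [gx0|gxn] := eqVneq (g y) 0; first by rewrite gx0 !mulr0 !mul0r.
by rewrite (@sum_nb y n) //; [ring | apply: gB].
Qed.

Lemma sum_one n : (n <= M)%N -> ip (uu n) (fun=> 1) = 1.
Proof.
elim: n => [|n IH] nM; first by rewrite ip_u0.
rewrite -uuS; last by lia.
rewrite (@sum_one_PT (uu n) n) ?IH //; try lia; move=> x; apply: uu_supp.
Qed.


Lemma energyE g n : (forall x, g x != 0 -> Ball n x) -> (n < M)%N ->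
  energy mu g = (QQ g g)%:E.
Proof.
move=> gB nM; have fB := Ball_fin M.
rewrite /energy (@esumT_fin _ _ (fun p => mu p.1 p.2 * (g p.1 - g p.2) ^+ 2)
   (Ball M `*` Ball M)).
- rewrite -EFinM; congr (_%:E).
  rewrite -fsbig_finite; last exact: (finite_setX fB fB).
  rewrite -(@pair_fsbig _ _ _ _ _ (Ball M) (Ball M)
     (fun x y => mu x y * (g x - g y) ^+ 2)) //.
  rewrite fsbig_finite //.
  under eq_bigr do rewrite fsbig_finite //.
  have := @QQ_sq g n gB nM; rewrite /SS => h; rewrite -h; field.
- by [].
- exact: (finite_setX fB fB).
- by move=> p; rewrite mulr_ge0 // sqr_ge0.
- move=> [x y] /= nB.
  have [xy|nxy] := boolP (adj mu x y); last by rewrite mu_eq0 // mul0r.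
  have [exy|nexy] := eqVneq (g x) (g y); first by rewrite exy subrr expr0n /= mulr0.
  exfalso; apply: nB.
  have [gx0|gxn] := eqVneq (g x) 0.
    have gyn : g y != 0 by rewrite -gx0 eq_sym.
    have By := gB y gyn.
    split; last by apply: (@Ball_mono n) => //; apply: ltnW.
    apply: (@Ball_mono n.+1) => //; apply: (@Ball_nb n y) => //.
    by rewrite adj_sym.
  have Bx := gB x gxn.
  split; first by apply: (@Ball_mono n) => //; apply: ltnW.
  by apply: (@Ball_mono n.+1) => //; apply: (@Ball_nb n x).
Qed.

Lemma esum0_term (X : choiceType) (F : X -> R) :
  (forall p, 0 <= F p) ->
  \esum_(p in [set: X]) (F p)%:E = 0%E -> forall p, F p = 0.
Proof.
move=> F0 h p; apply/eqP; rewrite eq_le F0 andbT.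
have : ((F p)%:E <= \esum_(q in [set: X]) (F q)%:E)%E.
  apply: esum_ge; exists [set p]; first by split; [exact: finite_set1|].
  by rewrite fsbig_set1.
by rewrite h -lee_fin.
Qed.

Lemma resist_bound g n x r : (forall x, g x != 0 -> Ball n x) -> (n < M)%N ->
  (resist mu rho x <= r%:E)%E -> 0 <= r ->
  (g rho - g x) ^+ 2 <= r * QQ g g.
Proof.
move=> gB nM hr r0; have E := @energyE g n gB nM; have Q0 := @QQ_ge0 g n gB nM.
have [Qp|] := ltrP 0 (QQ g g).
  have : ((`|g rho - g x| ^+ 2 / fine (energy mu g))%:E <= resist mu rho x)%E.
    apply: ereal_sup_ubound; exists g; last by [].
    by split; rewrite E ?ltry ?lte_fin.
  move=> /le_trans /(_ hr); rewrite E /= lee_fin real_normK ?num_real //.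
  by rewrite ler_pdivrMr.
move=> Qle; have Qz : QQ g g = 0 by apply/eqP; rewrite eq_le Qle Q0.
suff -> : g rho = g x by rewrite subrr expr0n /= Qz mulr0.
have e0 : energy mu g = 0%E by rewrite E Qz.
have e1 : (\esum_(p in [set: V * V]) (mu p.1 p.2 * (g p.1 - g p.2) ^+ 2)%:E = 0)%E.
  have : (2%:E * ((2^-1)%:E * \esum_(p in [set: V * V]) (mu p.1 p.2 * (g p.1 - g p.2) ^+ 2)%:E)
     = \esum_(p in [set: V * V]) (mu p.1 p.2 * (g p.1 - g p.2) ^+ 2)%:E)%E.
    by rewrite muleA -EFinM mulfV ?mul1e // pnatr_eq0.
  by move=> <-; rewrite /energy in e0; rewrite e0 mule0.
have t0 := @esum0_term (V * V)%type (fun p => mu p.1 p.2 * (g p.1 - g p.2) ^+ 2)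
   (fun p => mulr_ge0 (mu_ge0 _ _) (sqr_ge0 _)) e1.
have ga a b : adj mu a b -> g a = g b.
  move=> ab; have /= /eqP := t0 (a, b).
  rewrite mulf_eq0 (gt_eqF ab) /= sqrf_eq0 subr_eq0 => /eqP; done.
case: (mu_conn rho x) => s [ps <-].
elim: s rho ps => [|b s IH] a //= /andP[ab ps].
by rewrite (ga a b ab) IH.
Qed.

End Fin.

Lemma pkerE n : pker mu n rho rho = ww n.
Proof. by rewrite /pker /ww /uu /nu esum_set1 //= lee_fin ltW // muv_gt0. Qed.

Lemma mono_d M j : (j + 2 + (j + 2) <= M)%N ->
  ww (2 * j.+1) + ww (2 * j.+1).+1 <= ww (2 * j) + ww (2 * j).+1.
Proof.
move=> hM.
have h0 : 0 <= QQ M (comb 1 2 j) (comb 1 2 j).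
  apply: (@QQ_ge0 M _ j.+1); last by lia.
  move=> x; rewrite /comb !big_ord_recr big_ord0 /= add0r mul1r.
  have [h1|h1] := eqVneq (uu (j + 0) x) 0.
    rewrite h1 add0r => /uu_supp; by rewrite addn1.
  move=> _; apply: Ball_S; move: (@uu_supp _ _ h1); by rewrite addn0.
rewrite QQ_comb // !big_ord_recr !big_ord0 /= in h0.
have e0 : (j + 0 + (j + 0) = 2 * j)%N by lia.
have e1 : (j + 0 + (j + 1) = (2 * j).+1)%N by lia.
have e2 : (j + 1 + (j + 0) = (2 * j).+1)%N by lia.
have e3 : (j + 1 + (j + 1) = 2 * j.+1)%N by lia.
have e4 : ((2 * j).+2 = 2 * j.+1)%N by lia.
rewrite e0 e1 e2 e3 e4 expr1n mul1r in h0; lra.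
Qed.

Lemma comb_supp k L N0 x : comb k L N0 x != 0 -> Ball (N0 + L) x.
Proof.
move=> h.
case: (pselect (exists i : 'I_L, uu (N0 + i) x != 0)) => [[i hi]|ni].
  apply: (@Ball_mono (N0 + i)); first by have := ltn_ord i; lia.
  exact: uu_supp hi.
exfalso; move: h; rewrite /comb big1 ?mulr0 ?eqxx // => i _.
by apply/eqP/negPn/negP => hi; apply: ni; exists i.
Qed.

Lemma comb_ge0 k L N0 x : 0 <= k -> 0 <= comb k L N0 x.
Proof. by move=> k0; rewrite /comb mulr_ge0 // sumr_ge0 // => i _; apply: uu_ge0. Qed.

Lemma main_real m r : (1 <= m)%N -> 0 < r -> (m%:R%:E < r%:E * Vball mu rho r)%E ->
  qker mu (2 * m) rho rho <= 3 * r / m%:R.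
Proof.
move=> m1 r0 hV.
have hq : qker mu (2 * m) rho rho = (ww (2 * m) + ww (2 * m).+1) / 2.
  by rewrite /qker !pkerE mulrC.
rewrite hq.
have a0 : 0 <= (ww (2 * m) + ww (2 * m).+1) / 2 by rewrite divr_ge0 // addr_ge0 // uu_ge0.
pose M := (4 * m + 8)%N.
have [A1 A2] := @abstract_bound R ww m m1 (fun n => uu_ge0 n rho)
   (fun j hj => @mono_d M j ltac:(rewrite /M; lia)).
pose a := (ww (2 * m) + ww (2 * m).+1) / 2.
change (a <= 3 * r / m%:R).
have {}a0 : 0 <= a := a0.
pose K := (m./2).+1.
pose N0 := (2 * (m - m./2))%N.
pose L := (2 * K)%N.
have [hm1 hm2] : (2 * m./2 <= m /\ m <= 2 * m./2 + 1)%N.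
  have := odd_double_half m; rewrite -muln2.
  by case: (odd m) => /= <-; lia.
have eK : K = (m./2).+1 by [].
have eN : N0 = (2 * (m - m./2))%N by [].
have eL : L = (2 * K)%N by [].
have LR : (0 < L%:R :> R) by rewrite ltr0n eL eK; lia.
pose k : R := L%:R^-1.
have k0 : 0 <= k by rewrite invr_ge0 ltW.
pose f := comb k L N0.
have fsupp : forall x, f x != 0 -> Ball (N0 + L) x by move=> x; apply: comb_supp.
have NM : (N0 + L < M)%N by rewrite /M eN eL eK; lia.
have f0 x : 0 <= f x by apply: comb_ge0.
have Fa : a <= f rho := A1.
have Qb : QQ M f f <= a / m%:R.
  rewrite /f QQ_comb; last by rewrite /M eN eL eK; lia.
  by rewrite /k exprVn; exact: A2.
have Q0 : 0 <= QQ M f f by apply: (@QQ_ge0 M f (N0 + L)).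
have ip1 : ip M f (fun=> 1) = 1.
  rewrite /f /comb (ip_linl M k L (fun i => uu (N0 + i))).
  rewrite (eq_bigr (fun=> 1)); last first.
    by move=> i _; rewrite sum_one //; have := ltn_ord i; have eM : M = (4 * m + 8)%N by []; lia.
  by rewrite sumr_const card_ord /k mulVf // gt_eqF.
set s := Num.sqrt (r * QQ M f f).
have s0 : 0 <= s by apply: sqrtr_ge0.
have s2 : s ^+ 2 = r * QQ M f f by rewrite sqr_sqrtr // mulr_ge0 // ltW.
have mR : (0 < m%:R :> R) by rewrite ltr0n.
have key : f rho - s <= r / m%:R.
  have [dle|dpos] := lerP (f rho - s) 0.
    by apply: le_trans dle _; rewrite divr_ge0 // ltW.
  set d := f rho - s in dpos *.
  have dB x : (resist mu rho x <= r%:E)%E -> d <= f x.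
    move=> hx; have := @resist_bound M f (N0 + L) x r fsupp NM hx (ltW r0).
    move=> /ler_wsqrtr; rewrite sqrtr_sqr -/s => h.
    have := ler_norm (f rho - f x); rewrite /d; lra.
  have nuB : (Vball mu rho r <= (d^-1)%:E)%E.
    rewrite /Vball /nu /esum; apply: ge_ereal_sup => _ [A [finA AB] <-].
    rewrite fsbig_finite // sumEFin lee_fin.
    rewrite -(ler_pM2l dpos) mulfV ?gt_eqF // mulr_sumr.
    apply: (@le_trans _ _ (\sum_(x <- fset_set A) f x * (fun=> 1) x * muv mu x)).
      rewrite big_seq [X in _ <= X]big_seq; apply: ler_sum => x.
      rewrite in_fset_set // inE => /AB /= hx.
      by rewrite mulr1 ler_wpM2r // ?dB // ltW // muv_gt0.
    apply: (@le_trans _ _ (ip M f (fun=> 1))); last by rewrite ip1.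
    rewrite /ip; apply: sum_sub_le; rewrite ?fset_uniq //.
      by move=> x; rewrite mulr_ge0 // ?mulr1 // ltW // muv_gt0.
    move=> x xS; have -> : f x = 0; last by rewrite !mul0r.
    apply/eqP/negPn/negP => /fsupp hB; move: xS; rewrite memS //.
    by apply: (@Ball_mono (N0 + L)) => //; apply: ltnW.
  have : (m%:R%:E < (r / d)%:E)%E.
    apply: lt_le_trans hV _; rewrite EFinM; apply: lee_wpmul2l => //.
    by rewrite lee_fin ltW.
  rewrite lte_fin ltr_pdivlMr // => h.
  by rewrite ler_pdivlMr // mulrC ltW.
have t0 : 0 < r / m%:R by rewrite divr_gt0.
have sa : s ^+ 2 <= r / m%:R * a.
  rewrite s2 mulrAC -mulrA; apply: ler_wpM2l; first exact: ltW.
  by move: Qb; rewrite mulrC.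
set t := r / m%:R in key t0 sa *.
have -> : 3 * r / m%:R = 3 * t by rewrite /t mulrA.
have h : a <= t + s by lra.
have [hat|hta] := lerP a t; first by lra.
have h2 : (a - t) * (a - t) <= s * s.
  by apply: ler_pM; lra.
have e : (a - t) * (a - t) = a * (a - 3 * t) + t ^+ 2 + t * a by ring.
rewrite e -expr2 in h2.
rewrite leNgt; apply/negP => h3.
have : 0 < a * (a - 3 * t) by rewrite mulr_gt0 //; lra.
have : 0 < t ^+ 2 by rewrite exprn_gt0.
lra.
Qed.

End G.

Theorem lemma4p3 (R : realType) (V : choiceType) (mu : V -> V -> R) (rho : V)
  (Hg : weighted_graph mu) (H2 : exists x y : V, x <> y) (m : nat) (Hm : (1 <= m)%N) :
  ((qker mu (2 * m)%N rho rho)%:E <= 3%:E * hinv mu rho m%:R / m%:R%:E)%E.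
Proof.
have mR : (0 < m%:R :> R) by rewrite ltr0n.
have H0 : (0 <= hinv mu rho m%:R)%E.
  rewrite /hinv; apply: ereal_sup_ubound; exists 0 => //=.
  by rewrite /hfun mul0e lee_fin ler0n.
have key : forall r, (hinv mu rho m%:R < r%:E)%E ->
    qker mu (2 * m) rho rho <= 3 * r / m%:R.
  move=> r Hr; have r0 : 0 < r by rewrite -lte_fin; apply: le_lt_trans H0 Hr.
  apply: (@main_real R V mu rho Hg H2 m r Hm r0).
  rewrite ltNge; apply/negP => hle.
  have : (r%:E <= hinv mu rho m%:R)%E by apply: ereal_sup_ubound; exists r.
  by rewrite leNgt Hr.
move: H0 key; case: (hinv mu rho m%:R) => [h| |] H0 key //.
  rewrite inver (gt_eqF mR) -!EFinM lee_fin.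
  apply/ler_addgt0Pr => e e0.
  have := key (h + e * m%:R / 3); rewrite lte_fin ltrDl divr_gt0 ?mulr_gt0 //.
  move=> /(_ isT) /le_trans; apply; rewrite le_eqVlt; apply/orP; left; apply/eqP.
  by field; rewrite gt_eqF.
rewrite inver (gt_eqF mR) mulry gtr0_sg // mul1e mulyr gtr0_sg ?invr_gt0 // mul1e.
exact: leey.
Qed.
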